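(* There is a deterministic distributed dynamic data structure for $2$-hop neighborhood listing which handles edge insertions and deletions in $O\left(\frac{n}{\log n}\right)$ amortized rounds.
   Context: Highly dynamic network model: a synchronous network on a fixed set $V$ of $n$ nodes with unique identifiers starts as the empty graph; at the beginning of round $i$ the graph is $G_i=(V,E_i)$, obtained from the previous graph by an adversary inserting and/or deleting an arbitrary (unbounded) set of edges. At the start of each round every node is notified only of the insertions/deletions of edges incident to it; then each node may send a message of $O(\log n)$ bits to each of its current neighbors. A distributed dynamic data structure consists of a local part $DS_v$ at each node $v$; at the end of every round, $DS_v$ may be queried and must answer immediately, without any further communication, either correctly or with $\texttt{inconsistent}$. The amortized round complexity is at most $c$ if for every round $i$, the number of rounds up to round $i$ in which at least one node $v$ has $DS_v$ in an inconsistent state, divided by the total number of topology changes that occurred up to round $i$, is at most $c$. Let $E^{v,2}_i$ be the set of edges of $G_i$ incident to $v$ or to a neighbor of $v$. $2$-hop neighborhood listing: $DS_v$ must respond at the end of round $i$ to a query $\{u,w\}$ with $\texttt{true}$ if $\{u,w\}\in E^{v,2}_i$, $\texttt{false}$ otherwise, or $\texttt{inconsistent}$. *)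

(* Defs.v *)
From mathcomp Require Import all_boot.
Set Implicit Arguments.
Unset Strict Implicit.
Unset Printing Implicit Defensive.

(* Nodes are 'I_n; the identifier of a node is its index. *)

(* A dynamic graph: G i is the graph of round i (G 0 is the initial empty
   graph, before round 1).  Graphs are simple: symmetric irreflexive. *)
Definition dyn_graph (n : nat) := nat -> rel 'I_n.

Definition wf_dyn_graph n (G : dyn_graph n) : Prop :=
  (forall u w, G 0 u w = false) /\
  (forall i, symmetric (G i)) /\ (forall i, irreflexive (G i)).

Definition msg := seq bool.

(* Each node has a local state of type [state].
   - [init v]: initial state of node v (node knows its identifier and n);
   - [notify s ins del]: local update when the node is notified of the
     inserted / deleted edges incident to it (given by the other endpoints);
   - [send s u]: message (if any) sent to neighbor u in this round;
   - [receive s r]: local update on receiving r u from each neighbor u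
     (r u = None if u is not a neighbor or sent nothing);
   - [query s u w]: immediate answer to query {u,w}; None = inconsistent. *)
Record dist_alg (n : nat) := DistAlg {
  state : Type;
  init : 'I_n -> state;
  notify : state -> {set 'I_n} -> {set 'I_n} -> state;
  send : state -> 'I_n -> option msg;
  receive : state -> ('I_n -> option msg) -> state;
  query : state -> 'I_n -> 'I_n -> option bool
}.

Section Exec.
Variables (n : nat) (A : dist_alg n) (G : dyn_graph n).

(* edges incident to v inserted / deleted at the beginning of round i.+1 *)
Definition inserted (i : nat) (v : 'I_n) : {set 'I_n} :=
  [set u | G i.+1 v u && ~~ G i v u].
Definition deleted (i : nat) (v : 'I_n) : {set 'I_n} :=
  [set u | G i v u && ~~ G i.+1 v u].

(* exec i v = state of DS_v at the end of round i (exec 0 = initial). *)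
Fixpoint exec (i : nat) : 'I_n -> state A :=
  match i with
  | 0 => init A
  | i'.+1 =>
      let s1 := fun v => notify (exec i' v) (inserted i' v) (deleted i' v) in
      fun v => receive (s1 v)
                 (fun u => if G i'.+1 u v then send (s1 u) v else None)
  end.

Definition changes_in (i : nat) : nat :=
  #|[set p : 'I_n * 'I_n | (p.1 < p.2) && (G i.+1 p.1 p.2 != G i p.1 p.2)]|.

Definition changes_upto (i : nat) : nat := \sum_(j < i) changes_in j.

Definition in_2hop (i : nat) (v u w : 'I_n) : bool :=
  G i u w && [|| u == v, w == v, G i v u | G i v w].

Definition some_inconsistent (i : nat) : bool :=
  [exists v, exists u, exists w, (u != w) && (query (exec i v) u w == None)].

Definition inconsistent_rounds (i : nat) : nat :=
  \sum_(1 <= j < i.+1) some_inconsistent j.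

End Exec.

(* Messages have at most c * log n bits (log n made positive by +1). *)
Definition msg_bounded n (A : dist_alg n) (c : nat) : Prop :=
  forall (s : state A) (u : 'I_n) (m : msg),
    send s u = Some m -> size m <= c * (trunc_log 2 n).+1.

Definition two_hop_listing_correct n (A : dist_alg n) : Prop :=
  forall G : dyn_graph n, wf_dyn_graph G ->
  forall (i : nat) (v u w : 'I_n), u != w ->
  forall b, query (exec A G i v) u w = Some b -> b = in_2hop G i v u w.

(* Main.v *)
Require Import Defs.
From mathcomp Require Import all_boot.
From mathcomp Require Import zify.
Set Implicit Arguments.
Unset Strict Implicit.
Unset Printing Implicit Defensive.

Section Alg.
Variable n : nat.

Definition BB := maxn 1 (trunc_log 2 n).
Definition KK := n %/ BB + 1.

Record st := St { me : 'I_n; rr : nat; adj : 'I_n -> bool; chg : bool;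
  cp : 'I_n -> 'I_n -> bool; cnt : 'I_n -> nat }.

Definition a_init (v : 'I_n) : st := St v 0 (fun _ => false) false (fun _ _ => false) (fun _ => 0).

Definition a_notify (s : st) (ins del : {set 'I_n}) : st :=
  St (me s) (rr s) (fun x => (adj s x && (x \notin del)) || (x \in ins))
     [exists x, (x \in ins) || (x \in del)] (cp s)
     (fun u => if (u \in ins) || (u \in del) then 0 else cnt s u).

Definition chunk (s : st) : seq bool :=
  mkseq (fun t => [exists y : 'I_n, (nat_of_ord y == (rr s %% KK) * BB + t) && adj s y]) BB.

Definition a_send (s : st) (u : 'I_n) : option msg := Some (chg s :: chunk s).

Definition a_receive (s : st) (rcv : 'I_n -> option msg) : st :=
  St (me s) (rr s).+1 (adj s) (chg s)
    (fun u x => match rcv u with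
                | Some (_ :: bits) => if x %/ BB == rr s %% KK then nth false bits (x %% BB) else cp s u x
                | _ => cp s u x end)
    (fun u => match rcv u with
              | Some (f :: _) => if f then 1 else (cnt s u).+1
              | _ => 0 end).

Definition a_query (s : st) (u w : 'I_n) : option bool :=
  if u == me s then Some (adj s w) else
  if w == me s then Some (adj s u) else
  if adj s u && (KK <= cnt s u) then Some (cp s u w) else
  if adj s w && (KK <= cnt s w) then Some (cp s w u) else
  if ~~ adj s u && ~~ adj s w then Some false else None.

Definition alg : dist_alg n := DistAlg a_init a_notify a_send a_receive a_query.

Lemma BB_gt0 : 0 < BB.
Proof. by rewrite /BB leq_max. Qed.

Lemma msgb : msg_bounded alg 2.
Proof.
move=> s u m /= [<-] /=. rewrite size_mkseq /BB. 
move: (trunc_log 2 n) => k; rewrite gtn_max; apply/andP; split; apply/leP; lia.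
Qed.

Variable G : dyn_graph n.
Hypothesis wfG : wf_dyn_graph G.

Lemma exec_basic i v : [/\ me (exec alg G i v) = v, rr (exec alg G i v) = i &
  forall x, adj (exec alg G i v) x = G i v x].
Proof.
elim: i v => [|i IH] v /=.
  by split=> // x; case: wfG => ->.
have [h1 h2 h3] := IH v; split => //=; first by rewrite h2.
move=> x; rewrite h3 /inserted /deleted !inE.
by case: (G i v x); case: (G i.+1 v x).
Qed.

End Alg.

Section P.
Variable n : nat.
Variable G : dyn_graph n.
Hypothesis wfG : wf_dyn_graph G.

Lemma change_pos i a b : G i.+1 a b != G i a b -> 0 < changes_in G i.
Proof.
case: wfG => _ [sym irr] H.
rewrite /changes_in card_gt0; apply/set0Pn.
have nab : a != b by apply/eqP => E; move: H; rewrite E !irr.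
case: (ltngtP a b) => [lab|lba|eab]; last by move/eqP: nab; case; apply: val_inj.
  by exists (a, b); rewrite inE /= lab.
by exists (b, a); rewrite inE /= lba (sym i.+1 b) (sym i b).
Qed.

Lemma exec_S i v : exec (alg n) G i.+1 v =
  a_receive (a_notify (exec (alg n) G i v) (inserted G i v) (deleted G i v))
   (fun u => if G i.+1 u v then a_send (a_notify (exec (alg n) G i u) (inserted G i u) (deleted G i u)) v else None).
Proof. by []. Qed.

Definition Inv i := forall v u, G i v u ->
  [/\ 0 < cnt (exec (alg n) G i v) u <= i,
      0 < changes_in G (i - cnt (exec (alg n) G i v) u) &
   forall (x : 'I_n) j, i - cnt (exec (alg n) G i v) u <= j < i -> x %/ BB n = j %% KK n ->
      cp (exec (alg n) G i v) u x = G i u x].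

Lemma decode i u (x : 'I_n) : x %/ BB n = i %% KK n ->
  nth false (chunk (a_notify (exec (alg n) G i u) (inserted G i u) (deleted G i u))) (x %% BB n)
  = G i.+1 u x.
Proof.
move=> hx.
rewrite /chunk nth_mkseq; last by rewrite ltn_pmod // BB_gt0.
have [_ h2 h3] := exec_basic wfG i u.
rewrite /= h2 -hx -divn_eq.
have E y : adj (exec (alg n) G i u) y && (y \notin deleted G i u) || (y \in inserted G i u) = G i.+1 u y.
  by rewrite h3 /inserted /deleted !inE; case: (G i u y); case: (G i.+1 u y).
apply/existsP/idP => [[y /andP [/eqP/val_inj -> ]]|H]; first by rewrite E.
by exists x; rewrite eqxx E.
Qed.

Lemma inv_all i : Inv i.
Proof.
elim: i => [|i IH] v u.
  by case: wfG => ->.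
case: wfG => _ [sym irr] Huv.
have Hvu : G i.+1 u v by rewrite sym.
rewrite exec_S /= Hvu /=.
have [h1 h2 h3] := exec_basic wfG i v.
rewrite h2.
case: existsP => [[y Hy]|Hno].
  have Hc : 0 < changes_in G i.
    apply: (@change_pos i u y); move: Hy; rewrite /inserted /deleted !inE.
    by case: (G i u y); case: (G i.+1 u y).
  rewrite subn1 /= Hc; split => // x j /andP [Hj1 Hj2] Hx.
  have Eji : j = i by apply/eqP; rewrite eqn_leq Hj1 -ltnS Hj2.
  by rewrite Eji in Hx; rewrite -Hx eqxx decode.
have Hsame y : G i.+1 u y = G i u y.
  apply/eqP; apply/negP => Hne; apply: Hno; exists y; rewrite /inserted /deleted !inE.
  by move: Hne; case: (G i u y); case: (G i.+1 u y).
have Gi : G i v u by rewrite sym -Hsame.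
have -> : (u \in inserted G i v) || (u \in deleted G i v) = false.
  by rewrite /inserted /deleted !inE Gi Huv.
have [c1 c2 c3] := IH v u Gi.
split.
- by move: c1 => /andP [a b]; rewrite /= ltnS.
- by rewrite subSS.
move=> x j /andP [Hj1 Hj2] Hx.
case: eqP => Hxi; first by rewrite decode.
rewrite Hsame; apply: (c3 _ _ _ Hx); rewrite subSS in Hj1; rewrite Hj1 /=.
rewrite ltn_neqAle -ltnS Hj2 andbT; apply/eqP => Eji; apply: Hxi; by rewrite Hx Eji.
Qed.
End P.

Section Q.
Variable n : nat.
Variable G : dyn_graph n.
Hypothesis wfG : wf_dyn_graph G.

Lemma cover K m c : c < K -> exists j, m <= j < m + K /\ j %% K = c.
Proof.
move=> cK.
have K0 : 0 < K by case: K cK.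
have mK : m %% K < K by rewrite ltn_pmod.
exists (m + (c + K - m %% K) %% K); split.
  rewrite leq_addr /= ltn_add2l ltn_pmod //.
rewrite modnDmr.
have -> : m + (c + K - m %% K) = (m %/ K).+1 * K + c.
  have := divn_eq m K. lia.
by rewrite modnMDl modn_small.
Qed.

Lemma valid_cp i v u : G i v u -> KK n <= cnt (exec (alg n) G i v) u ->
  forall x, cp (exec (alg n) G i v) u x = G i u x.
Proof.
move=> Huv HK x.
have [c1 c2 c3] := inv_all wfG Huv.
have xc : x %/ BB n < KK n.
  rewrite /KK addn1 ltnS leq_div2r // ltnW //.
have [j [/andP [Hj1 Hj2] Hj3]] := cover (i - cnt (exec (alg n) G i v) u) xc.
apply: (c3 x j) => //.
move: c1 => /andP [_ c1]; apply/andP; split; lia.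
Qed.

Lemma correct : forall (i : nat) (v u w : 'I_n), u != w ->
  forall b, query (exec (alg n) G i v) u w = Some b -> b = in_2hop G i v u w.
Proof.
move=> i v u w uw b.
have [h1 h2 h3] := exec_basic wfG i v.
case: wfG => _ [sym irr].
rewrite /= /a_query h1 !h3 /in_2hop.
case: eqP => [->|nu]; first by move=> [<-]; rewrite andbT.
case: eqP => [->|nw]; first by move=> [<-]; rewrite /= andbT sym.
case Hu: (G i v u) => /=.
  case: ifP => HK; first by move=> [<-]; rewrite valid_cp // andbT.
  case Hw: (G i v w) => /=.
    case: ifP => HK'; first by move=> [<-]; rewrite valid_cp // /= andbT sym.
    by [].
  by [].
case Hw: (G i v w) => /=.
  case: ifP => HK'; first by move=> [<-]; rewrite valid_cp // /= andbT sym.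
  by [].
by move=> [<-]; rewrite andbF.
Qed.

Lemma incons j : some_inconsistent (alg n) G j ->
  exists m, [/\ m < j, j <= m + KK n & 0 < changes_in G m].
Proof.
move=> /existsP [v /existsP [u /existsP [w /andP [uw /eqP Hq]]]].
have [h1 h2 h3] := exec_basic wfG j v.
move: Hq; rewrite /= /a_query h1 !h3.
have key z : G j v z -> cnt (exec (alg n) G j v) z < KK n ->
   exists m, [/\ m < j, j <= m + KK n & 0 < changes_in G m].
  move=> Hz Hc; have [c1 c2 c3] := inv_all wfG Hz.
  exists (j - cnt (exec (alg n) G j v) z); split => //; move: c1 => /andP [c1 c1']; lia.
case: eqP => // _; case: eqP => // _.
case Hu: (G j v u) => /=.
  case: leqP => HK; first by [].
  by move=> _; apply: (key u).
case Hw: (G j v w) => //=.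
case: leqP => HK; first by [].
by move=> _; apply: (key w).
Qed.
End Q.

Lemma window_count m K a b :
  \sum_(a <= j < b) (m < j <= m + K) <= K /\
  \sum_(a <= j < b) (m < j <= m + K) <= b - m.+1.
Proof.
elim: b => [|b [IH1 IH2]]; first by rewrite big_geq.
case: (leqP a b) => ab; last by rewrite big_geq.
rewrite big_nat_recr //=.
case: (boolP (m < b <= m + K)) => /= H; move/andP: H => [H1 H2] || move: H => H; lia.
Qed.

Lemma count_window (f : nat -> bool) (c : nat -> nat) K i :
 (forall j, 0 < j <= i -> f j -> exists m, [/\ m < j, j <= m + K & 0 < c m]) ->
 \sum_(1 <= j < i.+1) f j <= K * \sum_(j < i) c j.
Proof.
move=> H.
apply: (@leq_trans (\sum_(1 <= j < i.+1) \sum_(m < i) ((m < j <= m + K) * c m))).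
  rewrite big_nat [X in _ <= X]big_nat; apply: leq_sum => j /andP [j1 j2].
  case fj: (f j) => //.
  have [m [m1 m2 m3]] := H j (ltac:(by rewrite j1 -ltnS)) fj.
  have mi : m < i by apply: (leq_trans m1); rewrite -ltnS.
  rewrite (bigD1 (Ordinal mi)) //= m1 m2 /= mul1n.
  exact: leq_trans m3 (leq_addr _ _).
rewrite exchange_big /= big_distrr /=; apply: leq_sum => m _.
rewrite -big_distrl /= leq_mul2r.
by case: (window_count m K 1 i.+1) => ->; rewrite orbT.
Qed.

Lemma log_le n : trunc_log 2 n <= n.
Proof.
case: n => [|n]; first by rewrite trunc_log0.
have := trunc_logP (isT : 1 < 2) (isT : 0 < n.+1).
move=> h; apply: leq_trans h; exact: ltnW (ltn_expl _ (isT : 1 < 2)).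
Qed.

Lemma KK_bound n : 2 <= n -> KK n * trunc_log 2 n <= 2 * n.
Proof.
move=> n2.
have t1 : 0 < trunc_log 2 n by rewrite trunc_log_gt0.
have BE : BB n = trunc_log 2 n by rewrite /BB; apply/maxn_idPr.
rewrite /KK BE mulnDl mul1n.
have := leq_divM n (trunc_log 2 n); have := log_le n; lia.
Qed.

Theorem lemma10 :
  exists (cmsg C N0 : nat) (A : forall n, dist_alg n),
    forall n : nat,
      msg_bounded (A n) cmsg /\
      two_hop_listing_correct (A n) /\
      (N0 <= n ->
       forall G : dyn_graph n, wf_dyn_graph G ->
       forall i : nat,
         inconsistent_rounds (A n) G i * trunc_log 2 n
           <= C * n * changes_upto G i).
Proof.
exists 2, 2, 2, alg => n; split; first exact: msgb.
split; first by move=> G wfG; exact: correct.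
move=> n2 G wfG i.
have H := @count_window (some_inconsistent (alg n) G) (changes_in G) (KK n) i
  (fun j _ hj => incons wfG hj).
rewrite /inconsistent_rounds /changes_upto.
apply: (leq_trans (leq_mul H (leqnn (trunc_log 2 n)))).
rewrite mulnAC; exact: leq_mul (KK_bound n2) (leqnn _).
Qed.
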